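(* Let $\mathcal{H}$ be a hedgehog with support function $h(s)=a_0+\sum_{n\geqslant1}(a_n\cos(ns)+b_n\sin(ns))$ and let $k>2$ be an integer. Every equiangular $k$-gon circumscribed about $\mathcal{H}$ is a regular $k$-gon with its center of mass at the Steiner point of $\mathcal{H}$ if and only if \[ h(s)=a_0+a_1\cos s+b_1\sin s+\sum_{k\mid n,\ n>1}\big(a_n\cos(ns)+b_n\sin(ns)\big). \]
   Context: Write $u(s)=(\cos s,\sin s)$, $u'(s)=(-\sin s,\cos s)$. A hedgehog is a closed planar curve determined by a smooth $2\pi$-periodic function $h$ (its support function) via $\mathcal{H}(s)=h(s)u(s)+h'(s)u'(s)$; the support line of $\mathcal{H}$ with normal $u(t)$ is $\{x:\langle x,u(t)\rangle=h(t)\}$. The Steiner point of $\mathcal{H}$ is $\frac1\pi\int_0^{2\pi}h(s)u(s)\,ds=(a_1,b_1)$. For $s\in\mathbb{R}$ and $j\in\mathbb{Z}$ let $\ell_j(s)=\{x:\langle x,u(s+\tfrac{2\pi j}{k})\rangle=h(s+\tfrac{2\pi j}{k})\}$. The equiangular $k$-gon circumscribed about $\mathcal{H}$ at parameter $s$ is the polygon with vertices $v_j(s)=\ell_j(s)\cap\ell_{j+1}(s)$, $j=0,\dots,k-1$ (indices mod $k$); i.e. each of its sides lies on a support line of $\mathcal{H}$ and consecutive side normals differ by $2\pi/k$. Its center of mass is $\frac1k\sum_{j}v_j(s)$. *)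

(* Defs.v *)
From Stdlib Require Import Reals Lra.
From Coquelicot Require Import Coquelicot.
Open Scope R_scope.

Definition pt := (R * R)%type.
Definition dot (x y : pt) : R := fst x * fst y + snd x * snd y.
Definition u (s : R) : pt := (cos s, sin s).
Definition u' (s : R) : pt := (- sin s, cos s).

Definition smooth (h : R -> R) : Prop := forall (n : nat) (x : R), ex_derive_n h n x.
Definition periodic2pi (h : R -> R) : Prop := forall s, h (s + 2 * PI) = h s.

Definition fa0 (h : R -> R) : R := / (2 * PI) * RInt h 0 (2 * PI).
Definition fa (h : R -> R) (n : nat) : R :=
  / PI * RInt (fun s => h s * cos (INR n * s)) 0 (2 * PI).
Definition fb (h : R -> R) (n : nat) : R :=
  / PI * RInt (fun s => h s * sin (INR n * s)) 0 (2 * PI).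

Definition steiner_point (h : R -> R) : pt :=
  (/ PI * RInt (fun s => h s * cos s) 0 (2 * PI),
   / PI * RInt (fun s => h s * sin s) 0 (2 * PI)).

(* Intersection point of the lines {x | <x,u(al)> = p} and {x | <x,u(be)> = q}
   (Cramer's rule; the lines are non-parallel when sin(be - al) <> 0). *)
Definition line_inter (al p be q : R) : pt :=
  let d := cos al * sin be - sin al * cos be in
  ((p * sin be - sin al * q) / d, (cos al * q - cos be * p) / d).

(* Normal angle of the support line l_j(s) *)
Definition theta (k : nat) (s : R) (j : nat) : R := s + 2 * PI * INR j / INR k.

Definition vertex (h : R -> R) (k : nat) (s : R) (j : nat) : pt :=
  line_inter (theta k s j) (h (theta k s j))
             (theta k s (S j)) (h (theta k s (S j))).

(* Signed length of the side lying on l_j(s), from v_{j-1}(s) to v_j(s),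
   measured along the direction u'(theta_j); j ranges over 1..k
   (l_k = l_0 by 2pi-periodicity). *)
Definition side_length (h : R -> R) (k : nat) (s : R) (j : nat) : R :=
  let v1 := vertex h k s j in
  let v0 := vertex h k s (pred j) in
  dot (fst v1 - fst v0, snd v1 - snd v0) (u' (theta k s j)).

(* The (equiangular) circumscribed k-gon at parameter s is regular:
   all its (signed) side lengths are equal. *)
Definition regular_polygon (h : R -> R) (k : nat) (s : R) : Prop :=
  forall i j : nat, (1 <= i <= k)%nat -> (1 <= j <= k)%nat ->
    side_length h k s i = side_length h k s j.

Definition center_of_mass (h : R -> R) (k : nat) (s : R) : pt :=
  (/ INR k * sum_n (fun j => fst (vertex h k s j)) (pred k),
   / INR k * sum_n (fun j => snd (vertex h k s j)) (pred k)).

Definition kterm (h : R -> R) (k : nat) (s : R) (n : nat) : R :=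
  if andb (Nat.ltb 1 n) (Nat.eqb (Nat.modulo n k) 0)
  then fa h n * cos (INR n * s) + fb h n * sin (INR n * s)
  else 0.

(* Main.v *)
Require Import Defs.
From Stdlib Require Import Reals Lra Psatz Lia.
From Coquelicot Require Import Coquelicot.
Open Scope R_scope.
Section Geo.

Lemma INRk_pos k : (2 < k)%nat -> 0 < INR k.
Proof. intros; apply lt_0_INR; lia. Qed.

Lemma alpha_bounds k : (2 < k)%nat -> 0 < 2*PI/INR k < PI.
Proof.
  intros Hk. pose proof PI_RGT_0. assert (H3: 3 <= INR k).
  { replace 3 with (INR 3) by (simpl; ring). apply le_INR; lia. }
  split. apply Rdiv_lt_0_compat; lra.
  apply (Rmult_lt_reg_r (INR k)). lra. unfold Rdiv. rewrite Rmult_assoc, Rinv_l by lra. nra.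
Qed.

Lemma sin_alpha_pos k : (2 < k)%nat -> 0 < sin (2*PI/INR k).
Proof. intros Hk; apply sin_gt_0; apply alpha_bounds; auto. Qed.

Lemma cos_lt_1 x : 0 < x < 2*PI -> cos x < 1.
Proof.
  intros Hx. replace x with (2*(x/2)) by field. rewrite cos_2a_sin.
  assert (0 < sin (x/2)) by (apply sin_gt_0; lra). nra.
Qed.

Lemma theta_S k s j : (0 < k)%nat -> theta k s (S j) = theta k s j + 2*PI/INR k.
Proof. intros. unfold theta. rewrite S_INR. field. apply not_0_INR; lia. Qed.

Lemma theta_eq k s j : (0 < k)%nat -> theta k s j = s + INR j * (2*PI/INR k).
Proof. intros. unfold theta. field. apply not_0_INR; lia. Qed.

Lemma theta_k k s : (0 < k)%nat -> theta k s k = s + 2*PI.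
Proof. intros. unfold theta. field. apply not_0_INR; lia. Qed.

Lemma dot_li_al al p be q :
  dot (line_inter al p be q) (u' al) = (q - p * cos (be - al)) / sin (be - al).
Proof.
  unfold dot, line_inter, u'; simpl. rewrite cos_minus, sin_minus.
  replace (sin be * cos al - cos be * sin al) with (cos al * sin be - sin al * cos be) by ring.
  set (d := cos al * sin be - sin al * cos be).
  pose proof (sin2_cos2 al) as E. unfold Rsqr in E.
  transitivity ((q * (sin al * sin al + cos al * cos al) - p * (cos be * cos al + sin be * sin al)) / d).
  unfold Rdiv; ring. rewrite E. unfold Rdiv; ring.
Qed.

Lemma dot_li_be al p be q :
  dot (line_inter al p be q) (u' be) = (q * cos (be - al) - p) / sin (be - al).
Proof.
  unfold dot, line_inter, u'; simpl. rewrite cos_minus, sin_minus.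
  replace (sin be * cos al - cos be * sin al) with (cos al * sin be - sin al * cos be) by ring.
  set (d := cos al * sin be - sin al * cos be).
  pose proof (sin2_cos2 be) as E. unfold Rsqr in E.
  transitivity ((q * (cos be * cos al + sin be * sin al) - p * (sin be * sin be + cos be * cos be)) / d).
  unfold Rdiv; ring. rewrite E. unfold Rdiv; ring.
Qed.

Lemma side_formula h k s j : (2 < k)%nat -> (1 <= j)%nat ->
  side_length h k s j =
  (h (theta k s (S j)) + h (theta k s (pred j)) - 2 * cos (2*PI/INR k) * h (theta k s j))
   / sin (2*PI/INR k).
Proof.
  intros Hk Hj. unfold side_length, vertex.
  replace (S (pred j)) with j by lia.
  set (v1 := line_inter _ _ _ _). set (v0 := line_inter _ _ _ _).
  transitivity (dot v1 (u' (theta k s j)) - dot v0 (u' (theta k s j))).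
  { unfold dot; simpl; ring. }
  unfold v1, v0. rewrite dot_li_al, dot_li_be.
  assert (E1: theta k s (S j) - theta k s j = 2*PI/INR k) by (rewrite theta_S by lia; ring).
  assert (E2: theta k s j - theta k s (pred j) = 2*PI/INR k).
  { replace j with (S (pred j)) at 1 by lia. rewrite theta_S by lia; ring. }
  rewrite E1, E2. pose proof (sin_alpha_pos k Hk). field. lra.
Qed.

Lemma li_circle al be P A B :
  cos al * sin be - sin al * cos be <> 0 ->
  line_inter al (P + A * cos al + B * sin al) be (P + A * cos be + B * sin be) =
  (A + P * (sin be - sin al) / (cos al * sin be - sin al * cos be),
   B + P * (cos al - cos be) / (cos al * sin be - sin al * cos be)).
Proof. intros. unfold line_inter. simpl. f_equal; field; auto. Qed.

Lemma sum_tele (A c : R) (f : nat -> R) n :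
  sum_n (fun j => A + c * (f (S j) - f j)) n = INR (S n) * A + c * (f (S n) - f O).
Proof.
  induction n.
  - rewrite sum_O. simpl. ring.
  - rewrite sum_Sn, IHn. rewrite !S_INR. change plus with Rplus. simpl. ring.
Qed.

Lemma dcross k s j : (0 < k)%nat ->
  cos (theta k s j) * sin (theta k s (S j)) - sin (theta k s j) * cos (theta k s (S j))
  = sin (2*PI/INR k).
Proof.
  intros. rewrite theta_S by auto. rewrite sin_plus, cos_plus.
  pose proof (sin2_cos2 (theta k s j)) as E. unfold Rsqr in E.
  transitivity (sin (2 * PI / INR k) * (sin (theta k s j) * sin (theta k s j) + cos (theta k s j) * cos (theta k s j))).
  ring. rewrite E; ring.
Qed.

Lemma center_circle h k s P A B : (2 < k)%nat ->
  (forall j, h (theta k s j) = P + A * cos (theta k s j) + B * sin (theta k s j)) ->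
  center_of_mass h k s = (A, B).
Proof.
  intros Hk Hc. pose proof (sin_alpha_pos k Hk) as Hsn.
  assert (Hv : forall j, vertex h k s j =
    (A + P / sin (2*PI/INR k) * (sin (theta k s (S j)) - sin (theta k s j)),
     B + (- P / sin (2*PI/INR k)) * (cos (theta k s (S j)) - cos (theta k s j)))).
  { intros j. unfold vertex. rewrite !Hc. rewrite li_circle.
    rewrite dcross by lia. f_equal; field; lra.
    rewrite dcross by lia. lra. }
  unfold center_of_mass.
  rewrite (sum_n_ext _ (fun j => A + P / sin (2*PI/INR k) * (sin (theta k s (S j)) - sin (theta k s j))))
    by (intros; rewrite Hv; reflexivity).
  rewrite (sum_n_ext (fun j => snd _) (fun j => B + (- P / sin (2*PI/INR k)) * (cos (theta k s (S j)) - cos (theta k s j))))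
    by (intros; rewrite Hv; reflexivity).
  rewrite (sum_tele A _ (fun j => sin (theta k s j))).
  rewrite (sum_tele B _ (fun j => cos (theta k s j))). replace (S (pred k)) with k by lia.
  rewrite theta_k by lia. replace (theta k s 0) with s by (unfold theta; simpl; field; apply not_0_INR; lia).
  replace (sin (s + 2*PI)) with (sin s) by (rewrite <- (sin_period s 1); f_equal; simpl; ring).
  replace (cos (s + 2*PI)) with (cos s) by (rewrite <- (cos_period s 1); f_equal; simpl; ring).
  assert (INR k <> 0) by (apply not_0_INR; lia).
  f_equal; field; split; auto; lra.
Qed.

Lemma regular_circle h k s P A B : (2 < k)%nat ->
  (forall j, h (theta k s j) = P + A * cos (theta k s j) + B * sin (theta k s j)) ->
  regular_polygon h k s.
Proof.
  intros Hk Hc.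
  assert (Hall : forall j, (1 <= j)%nat -> side_length h k s j =
     P * (2 - 2 * cos (2*PI/INR k)) / sin (2*PI/INR k)).
  { intros j Hj. rewrite side_formula by auto. rewrite !Hc.
    rewrite theta_S by lia. replace (theta k s (pred j)) with (theta k s j - 2*PI/INR k).
    2:{ replace j with (S (pred j)) at 1 by lia. rewrite theta_S by lia. ring. }
    rewrite cos_plus, sin_plus, cos_minus, sin_minus. pose proof (sin_alpha_pos k Hk).
    field. lra. }
  intros i j Hi Hj. rewrite !Hall by lia. reflexivity.
Qed.

End Geo.
Lemma cos_sum2 x a : cos (x + a) + cos (x - a) = 2 * cos x * cos a.
Proof. rewrite cos_plus, cos_minus; ring. Qed.
Lemma sin_sum2 x a : sin (x + a) + sin (x - a) = 2 * sin x * cos a.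
Proof. rewrite sin_plus, sin_minus; ring. Qed.

Lemma cross_sa s a : sin (s + a) * cos s - cos (s + a) * sin s = sin a.
Proof.
  rewrite sin_plus, cos_plus. pose proof (sin2_cos2 s) as E. unfold Rsqr in E.
  transitivity (sin a * (sin s * sin s + cos s * cos s)). ring. rewrite E; ring.
Qed.

Lemma lhs_struct h k a1 b1 : (2 < k)%nat ->
  (forall s, regular_polygon h k s /\ center_of_mass h k s = (a1, b1)) ->
  forall t, h (t + 2*PI/INR k) - a1 * cos (t + 2*PI/INR k) - b1 * sin (t + 2*PI/INR k)
          = h t - a1 * cos t - b1 * sin t.
Proof.
  intros Hk HL.
  pose proof (sin_alpha_pos k Hk) as Hsn. pose proof (alpha_bounds k Hk) as Hab.
  set (al := 2*PI/INR k) in *.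
  set (c := cos al). set (sn := sin al) in *.
  assert (Hc1 : c < 1) by (apply cos_lt_1; lra).
  set (E := fun t => h (t + 2*al) - 2*c*h (t+al) + h t).
  assert (HE : forall s, E (s + al) = E s).
  { intros s. destruct (HL s) as [Hr _].
    specialize (Hr 1%nat 2%nat ltac:(lia) ltac:(lia)).
    rewrite !side_formula in Hr by (auto; lia).
    simpl pred in Hr. rewrite !theta_eq in Hr by lia. fold al in Hr. fold c sn in Hr.
    unfold Rdiv in Hr. apply Rmult_eq_reg_r in Hr; [|apply Rinv_neq_0_compat; lra].
    unfold E. simpl INR in Hr.
    replace (s + al + 2*al) with (s + (1+1+1)*al) by ring.
    replace (s + al + al) with (s + (1+1)*al) by ring.
    replace (s + 2*al) with (s + (1+1)*al) by ring.
    replace (s + al) with (s + 1*al) by ring.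
    replace (h (s + 0 * al)) with (h s) in Hr by (f_equal; ring). lra. }
  assert (HE2 : forall s, E (s + 2*al) = E s).
  { intros s. replace (s + 2*al) with ((s + al) + al) by ring. rewrite !HE. auto. }
  set (g0 := fun t => E t / (2 - 2*c)).
  set (w := fun t => h t - g0 t).
  assert (Hw : forall t, w (t + 2*al) = 2*c*w (t+al) - w t).
  { intros t. unfold w, g0. rewrite HE2, HE. unfold E. field. lra. }
  assert (Hg0 : forall j t, g0 (t + INR j * al) = g0 t).
  { induction j; intros t. simpl. f_equal; ring.
    rewrite S_INR. replace (t + (INR j + 1) * al) with ((t + INR j * al) + al) by ring.
    unfold g0. rewrite HE. apply IHj. }
  intros t0.
  cut (forall s, w s = a1 * cos s + b1 * sin s).
  { intros Hws. assert (forall s, h s - a1 * cos s - b1 * sin s = g0 s).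
    { intros s. specialize (Hws s). unfold w in Hws. lra. }
    rewrite !H. replace (t0 + al) with (t0 + INR 1 * al) by (simpl; ring). apply Hg0. }
  intros s.
  set (A := (w s * sin (s + al) - sin s * w (s + al)) / sn).
  set (B := (cos s * w (s + al) - cos (s + al) * w s) / sn).
  assert (HP : forall j, w (s + INR j * al) = A * cos (s + INR j * al) + B * sin (s + INR j * al)
                 /\ w (s + INR (S j) * al) = A * cos (s + INR (S j) * al) + B * sin (s + INR (S j) * al)).
  { induction j.
    - simpl. replace (s + 0 * al) with s by ring. replace (s + 1 * al) with (s + al) by ring.
      pose proof (cross_sa s al) as X. fold sn in X. unfold A, B.
      split.
      + transitivity (w s * (sin (s + al) * cos s - cos (s + al) * sin s) / sn).
        rewrite X. field. lra. field. lra.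
      + transitivity (w (s+al) * (sin (s + al) * cos s - cos (s + al) * sin s) / sn).
        rewrite X. field. lra. field. lra.
    - destruct IHj as [I1 I2]. split; auto.
      rewrite !S_INR. rewrite !S_INR in I2.
      replace (s + (INR j + 1 + 1) * al) with ((s + INR j * al) + 2*al) by ring.
      replace (s + (INR j + 1) * al) with ((s + INR j * al) + al) in I2 by ring.
      rewrite Hw, I2, I1. set (t := s + INR j * al).
      replace (t + 2*al) with ((t+al) + al) by ring.
      pose proof (cos_sum2 (t+al) al) as C1. pose proof (sin_sum2 (t+al) al) as S1.
      replace (t + al - al) with t in C1, S1 by ring. fold c in C1, S1.
      assert (cos (t + al + al) = 2 * cos (t+al) * c - cos t) by lra.
      assert (sin (t + al + al) = 2 * sin (t+al) * c - sin t) by lra.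
      rewrite H, H0. ring. }
  assert (Hcm : center_of_mass h k s = (A, B)).
  { apply center_circle with (P := g0 s); auto.
    intros j. rewrite theta_eq by lia. fold al.
    destruct (HP j) as [H1 _]. rewrite <- Hg0 with (j := j).
    replace (h (s + INR j * al)) with (w (s + INR j * al) + g0 (s + INR j * al)) by (unfold w; ring).
    rewrite H1. ring. }
  destruct (HL s) as [_ Hc']. rewrite Hcm in Hc'. injection Hc' as -> ->.
  destruct (HP 0%nat) as [H0 _]. simpl in H0. replace (s + 0 * al) with s in H0 by ring. exact H0.
Qed.
Definition contR (f : R -> R) := forall x, continuous f x.

Lemma ex_RInt_c f a b : contR f -> ex_RInt f a b.
Proof. intros H. apply (ex_RInt_continuous (V:=R_CompleteNormedModule)). intros; apply H. Qed.

Lemma RInt_add f g a b : contR f -> contR g ->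
  RInt (fun t => f t + g t) a b = RInt f a b + RInt g a b.
Proof. intros. apply (RInt_plus f g); apply ex_RInt_c; auto. Qed.

Lemma RInt_sub f g a b : contR f -> contR g ->
  RInt (fun t => f t - g t) a b = RInt f a b - RInt g a b.
Proof. intros. apply (RInt_minus f g); apply ex_RInt_c; auto. Qed.

Lemma RInt_scl f c a b : contR f ->
  RInt (fun t => c * f t) a b = c * RInt f a b.
Proof. intros. apply (RInt_scal f a b c); apply ex_RInt_c; auto. Qed.

Lemma RInt_shift F b c d : contR F ->
  RInt (fun t => F (t + b)) c d = RInt F (c + b) (d + b).
Proof.
  intros HF.
  pose proof (RInt_comp_lin (V:=R_CompleteNormedModule) F 1 b c d (ex_RInt_c _ _ _ HF)) as E.
  replace (c + b) with (1*c+b) by ring. replace (d + b) with (1*d+b) by ring.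
  etransitivity; [| apply E]. apply RInt_ext. intros x _.
  replace (1*x+b) with (x+b) by ring. change (scal 1 (F (x+b))) with (1 * F (x+b)).
  apply eq_sym, Rmult_1_l.
Qed.

Lemma per_int F b : contR F -> (forall t, F (t + 2*PI) = F t) ->
  RInt (fun t => F (t + b)) 0 (2*PI) = RInt F 0 (2*PI).
Proof.
  intros HF Hp. rewrite RInt_shift by auto. replace (0 + b) with b by ring.
  rewrite <- (RInt_Chasles F b 0 (2*PI+b)) by (apply ex_RInt_c; auto).
  rewrite <- (RInt_Chasles F 0 (2*PI) (2*PI+b)) by (apply ex_RInt_c; auto).
  assert (E1 : RInt F (2*PI) (2*PI+b) = RInt F 0 b).
  { replace (2*PI) with (0 + 2*PI) at 1 by ring. replace (2*PI+b) with (b + 2*PI) by ring.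
    rewrite <- RInt_shift by auto. apply RInt_ext; intros; apply Hp. }
  rewrite E1. rewrite <- (opp_RInt_swap F 0 b) by (apply ex_RInt_c; auto).
  change plus with Rplus. change opp with Ropp. simpl. ring.
Qed.

Lemma per_int2 F x : contR F -> (forall t, F (t + 2*PI) = F t) ->
  RInt (fun u => F (x + u)) (-PI) PI = RInt F 0 (2*PI).
Proof.
  intros HF Hp. rewrite <- (per_int F (x - PI)) by auto.
  rewrite RInt_shift by auto.
  transitivity (RInt (fun u => F (u + x)) (-PI) PI).
  { apply RInt_ext. intros; f_equal; ring. }
  rewrite RInt_shift by auto. f_equal; ring.
Qed.
Lemma dcont (f : R -> R) x : ex_derive f x -> continuous f x.
Proof. intros H. apply (ex_derive_continuous (K:=R_AbsRing) (V:=R_NormedModule) f x H). Qed.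
Ltac cont := intro; apply dcont; auto_derive; repeat split; auto.

Lemma sin_2pim m : sin (INR m * (2*PI)) = 0.
Proof. replace (INR m * (2*PI)) with (0 + 2 * INR m * PI) by ring. rewrite sin_period. apply sin_0. Qed.
Lemma cos_2pim m : cos (INR m * (2*PI)) = 1.
Proof. replace (INR m * (2*PI)) with (0 + 2 * INR m * PI) by ring. rewrite cos_period. apply cos_0. Qed.

Ltac toR := match goal with |- ?a = ?b => change (@eq R a b) end.
Ltac cont0 := apply dcont; auto_derive; repeat split; auto.

Lemma int_cos_m m : (1 <= m)%nat -> RInt (fun t => cos (INR m * t)) 0 (2*PI) = 0.
Proof.
  intros Hm. assert (Hm0 : INR m <> 0) by (apply not_0_INR; lia).
  assert (H : is_RInt (fun t => cos (INR m * t)) 0 (2*PI)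
     (sin (INR m * (2*PI)) / INR m - sin (INR m * 0) / INR m)).
  { apply (is_RInt_derive (V:=R_CompleteNormedModule) (fun t => sin (INR m * t) / INR m)).
    - intros; auto_derive; auto. field; auto.
    - intros x _. cont0. }
  rewrite (is_RInt_unique _ _ _ _ H). toR. rewrite sin_2pim, Rmult_0_r, sin_0. field; auto.
Qed.

Lemma int_sin_m m : (1 <= m)%nat -> RInt (fun t => sin (INR m * t)) 0 (2*PI) = 0.
Proof.
  intros Hm. assert (Hm0 : INR m <> 0) by (apply not_0_INR; lia).
  assert (H : is_RInt (fun t => sin (INR m * t)) 0 (2*PI)
     (- cos (INR m * (2*PI)) / INR m - - cos (INR m * 0) / INR m)).
  { apply (is_RInt_derive (V:=R_CompleteNormedModule) (fun t => - cos (INR m * t) / INR m)).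
    - intros; auto_derive; auto. field; auto.
    - intros x _. cont0. }
  rewrite (is_RInt_unique _ _ _ _ H). toR. rewrite cos_2pim, Rmult_0_r, cos_0. field; auto.
Qed.

Lemma orth n : (2 <= n)%nat ->
  RInt (fun t => cos t * cos (INR n * t)) 0 (2*PI) = 0 /\
  RInt (fun t => sin t * cos (INR n * t)) 0 (2*PI) = 0 /\
  RInt (fun t => cos t * sin (INR n * t)) 0 (2*PI) = 0 /\
  RInt (fun t => sin t * sin (INR n * t)) 0 (2*PI) = 0.
Proof.
  intros Hn.
  assert (Hm : INR (n - 1) = INR n - 1) by (rewrite minus_INR by lia; simpl; ring).
  assert (Hp : INR (n + 1) = INR n + 1) by (rewrite plus_INR; simpl; ring).
  assert (Km : forall t, INR (n-1) * t = INR n * t - t) by (intros; rewrite Hm; ring).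
  assert (Kp : forall t, INR (n+1) * t = INR n * t + t) by (intros; rewrite Hp; ring).
  assert (C1 : forall f g, contR f -> contR g -> RInt (fun t => /2 * f t + /2 * g t) 0 (2*PI)
           = /2 * RInt f 0 (2*PI) + /2 * RInt g 0 (2*PI)).
  { intros. rewrite RInt_add. rewrite !RInt_scl; auto.
    intro x; apply (continuous_scal_r (/2) f x); auto.
    intro x; apply (continuous_scal_r (/2) g x); auto. }
  assert (C2 : forall f g, contR f -> contR g -> RInt (fun t => /2 * f t - /2 * g t) 0 (2*PI)
           = /2 * RInt f 0 (2*PI) - /2 * RInt g 0 (2*PI)).
  { intros. rewrite RInt_sub. rewrite !RInt_scl; auto.
    intro x; apply (continuous_scal_r (/2) f x); auto.
    intro x; apply (continuous_scal_r (/2) g x); auto. }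
  assert (cc : forall m, contR (fun t => cos (INR m * t))) by (intro m; cont).
  assert (cs : forall m, contR (fun t => sin (INR m * t))) by (intro m; cont).
  repeat split.
  - rewrite (RInt_ext _ (fun t => /2 * cos (INR (n-1) * t) + /2 * cos (INR (n+1) * t))).
    rewrite C1, !int_cos_m by (auto; lia). toR; ring.
    intros t _. toR. rewrite Km, Kp, cos_minus, cos_plus. field.
  - rewrite (RInt_ext _ (fun t => /2 * sin (INR (n+1) * t) - /2 * sin (INR (n-1) * t))).
    rewrite C2, !int_sin_m by (auto; lia). toR; ring.
    intros t _. toR. rewrite Km, Kp, sin_minus, sin_plus. field.
  - rewrite (RInt_ext _ (fun t => /2 * sin (INR (n+1) * t) + /2 * sin (INR (n-1) * t))).
    rewrite C1, !int_sin_m by (auto; lia). toR; ring.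
    intros t _. toR. rewrite Km, Kp, sin_minus, sin_plus. field.
  - rewrite (RInt_ext _ (fun t => /2 * cos (INR (n-1) * t) - /2 * cos (INR (n+1) * t))).
    rewrite C2, !int_cos_m by (auto; lia). toR; ring.
    intros t _. toR. rewrite Km, Kp, cos_minus, cos_plus. field.
Qed.
Lemma cosP t : cos (t + 2*PI) = cos t.
Proof. rewrite <- (cos_period t 1). f_equal. simpl; ring. Qed.
Lemma sinP t : sin (t + 2*PI) = sin t.
Proof. rewrite <- (sin_period t 1). f_equal. simpl; ring. Qed.
Lemma cosnP n t : cos (INR n * (t + 2*PI)) = cos (INR n * t).
Proof. rewrite <- (cos_period (INR n * t) n). f_equal. ring. Qed.
Lemma sinnP n t : sin (INR n * (t + 2*PI)) = sin (INR n * t).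
Proof. rewrite <- (sin_period (INR n * t) n). f_equal. ring. Qed.

Lemma cos_ne1 k n : (2 < k)%nat -> (n mod k <> 0)%nat -> cos (INR n * (2*PI/INR k)) < 1.
Proof.
  intros Hk Hr. pose proof (Nat.div_mod_eq n k) as Hd.
  pose proof (Nat.mod_upper_bound n k ltac:(lia)) as Hu.
  set (q := (n / k)%nat) in *. set (r := (n mod k)%nat) in *.
  assert (Hk0 : 0 < INR k) by (apply lt_0_INR; lia).
  assert (HI : INR n = INR k * INR q + INR r) by (rewrite Hd at 1; rewrite plus_INR, mult_INR; ring).
  replace (INR n * (2*PI/INR k)) with (2*PI*INR r/INR k + 2*INR q*PI) by (rewrite HI; field; lra).
  rewrite cos_period. apply cos_lt_1. pose proof PI_RGT_0.
  assert (0 < INR r) by (apply lt_0_INR; lia). assert (INR r < INR k) by (apply lt_INR; lia).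
  split. apply Rdiv_lt_0_compat; nra.
  apply (Rmult_lt_reg_r (INR k)); auto. unfold Rdiv. rewrite Rmult_assoc, Rinv_l by lra. nra.
Qed.

Lemma contR_scal c f : contR f -> contR (fun t => c * f t).
Proof. intros H x. apply (continuous_scal_r c f x); auto. Qed.
Lemma contR_add f g : contR f -> contR g -> contR (fun t => f t + g t).
Proof. intros H1 H2 x. apply (continuous_plus f g x); auto. Qed.

Lemma coef_vanish (h : R -> R) k a1 b1 n : (2 < k)%nat -> (forall y, ex_derive h y) -> periodic2pi h ->
  (forall t, h (t + 2*PI/INR k) - a1 * cos (t + 2*PI/INR k) - b1 * sin (t + 2*PI/INR k)
           = h t - a1 * cos t - b1 * sin t) ->
  (2 <= n)%nat -> (n mod k <> 0)%nat -> fa h n = 0 /\ fb h n = 0.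
Proof.
  intros Hk Hd Hp Hs Hn Hr.
  set (al := 2*PI/INR k) in *.
  set (g := fun t => h t - a1 * cos t - b1 * sin t).
  assert (Hg : forall t, g (t + al) = g t) by (intros; apply Hs).
  assert (Hgp : forall t, g (t + 2*PI) = g t) by (intros; unfold g; rewrite Hp, cosP, sinP; auto).
  assert (cgc : contR (fun t => g t * cos (INR n * t))) by (unfold g; cont).
  assert (cgs : contR (fun t => g t * sin (INR n * t))) by (unfold g; cont).
  set (Ic := RInt (fun t => g t * cos (INR n * t)) 0 (2*PI)).
  set (Is := RInt (fun t => g t * sin (INR n * t)) 0 (2*PI)).
  set (C := cos (INR n * al)). set (S := sin (INR n * al)).
  assert (HC : C < 1) by (apply cos_ne1; auto).
  assert (E1 : Ic = C * Ic - S * Is).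
  { unfold Ic at 1. rewrite <- (per_int (fun t => g t * cos (INR n * t)) al); auto.
    2:{ intros; rewrite Hgp, cosnP; auto. }
    rewrite (RInt_ext _ (fun t => C * (g t * cos (INR n * t)) - S * (g t * sin (INR n * t)))).
    rewrite RInt_sub, !RInt_scl; auto.
    apply contR_scal; auto.
    apply contR_scal; auto.
    intros t _. rewrite Hg. replace (INR n * (t + al)) with (INR n * t + INR n * al) by ring.
    rewrite cos_plus. unfold C, S. toR; ring. }
  assert (E2 : Is = S * Ic + C * Is).
  { unfold Is at 1. rewrite <- (per_int (fun t => g t * sin (INR n * t)) al); auto.
    2:{ intros; rewrite Hgp, sinnP; auto. }
    rewrite (RInt_ext _ (fun t => S * (g t * cos (INR n * t)) + C * (g t * sin (INR n * t)))).
    rewrite RInt_add, !RInt_scl; auto.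
    apply contR_scal; auto.
    apply contR_scal; auto.
    intros t _. rewrite Hg. replace (INR n * (t + al)) with (INR n * t + INR n * al) by ring.
    rewrite sin_plus. unfold C, S. toR; ring. }
  assert (HIc : Ic = 0).
  { assert (X : Ic * ((1-C)*(1-C) + S*S) = 0).
    { transitivity ((1-C)*((1-C)*Ic + S*Is) - S*((1-C)*Is - S*Ic)). ring.
      replace ((1-C)*Ic + S*Is) with 0 by lra. replace ((1-C)*Is - S*Ic) with 0 by lra. ring. }
    apply Rmult_integral in X. destruct X; auto. nra. }
  assert (HIs : Is = 0).
  { rewrite HIc in E2. assert ((1-C)*Is = 0) by lra. apply Rmult_integral in H. destruct H; auto. lra. }
  destruct (orth n Hn) as (O1 & O2 & O3 & O4).
  assert (cc1 : contR (fun t => cos t * cos (INR n * t))) by cont.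
  assert (cc2 : contR (fun t => sin t * cos (INR n * t))) by cont.
  assert (cc3 : contR (fun t => cos t * sin (INR n * t))) by cont.
  assert (cc4 : contR (fun t => sin t * sin (INR n * t))) by cont.
  split; unfold fa, fb.
  - rewrite (RInt_ext _ (fun t => (g t * cos (INR n * t) + a1 * (cos t * cos (INR n * t)))
                                  + b1 * (sin t * cos (INR n * t)))).
    rewrite RInt_add, RInt_add, !RInt_scl; auto.
    fold Ic. rewrite HIc, O1, O2. toR; ring.
    apply contR_scal; auto.
    apply contR_add; auto. apply contR_scal; auto.
    apply contR_scal; auto.
    intros t _. unfold g. toR; ring.
  - rewrite (RInt_ext _ (fun t => (g t * sin (INR n * t) + a1 * (cos t * sin (INR n * t)))
                                  + b1 * (sin t * sin (INR n * t)))).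
    rewrite RInt_add, RInt_add, !RInt_scl; auto.
    fold Is. rewrite HIs, O3, O4. toR; ring.
    apply contR_scal; auto.
    apply contR_add; auto. apply contR_scal; auto.
    apply contR_scal; auto.
    intros t _. unfold g. toR; ring.
Qed.
Lemma cmul (f g : R -> R) x : continuous f x -> continuous g x -> continuous (fun t => f t * g t) x.
Proof. intros. apply (continuous_mult f g x); auto. Qed.
Lemma cminus (f g : R -> R) x : continuous f x -> continuous g x -> continuous (fun t => f t - g t) x.
Proof. intros. apply (continuous_minus f g x); auto. Qed.
Lemma cplus (f g : R -> R) x : continuous f x -> continuous g x -> continuous (fun t => f t + g t) x.
Proof. intros. apply (continuous_plus f g x); auto. Qed.

Lemma cont_abs_pt (f : R -> R) x : continuous f x -> continuity_pt (fun y => Rabs (f y)) x.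
Proof.
  intros H. apply (continuity_pt_comp f Rabs). apply continuity_pt_filterlim; auto.
  apply Rcontinuity_abs.
Qed.

Lemma RL_bound a b (q q' : R -> R) : a <= b ->
  (forall u, a <= u <= b -> is_derive q u (q' u)) ->
  (forall u, a <= u <= b -> continuous q' u) ->
  exists C, 0 <= C /\ forall M, 0 < M ->
    Rabs (RInt (fun u => q u * sin (M * u)) a b) <= C / M.
Proof.
  intros Hab Hd Hc.
  destruct (continuity_ab_maj (fun u => Rabs (q' u)) a b Hab) as [Mx [HM HMx]].
  { intros c Hc'. apply cont_abs_pt. auto. }
  set (K := Rabs (q' Mx)).
  assert (HK : 0 <= K) by apply Rabs_pos.
  exists (Rabs (q a) + Rabs (q b) + (b - a) * K). split.
  { pose proof (Rabs_pos (q a)); pose proof (Rabs_pos (q b)). nra. }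
  intros M HM0.
  assert (Hqc : forall u, a <= u <= b -> continuous q u).
  { intros u Hu. apply dcont. exists (q' u); apply Hd; auto. }
  assert (Hmin : Rmin a b = a) by (apply Rmin_left; auto).
  assert (Hmax : Rmax a b = b) by (apply Rmax_right; auto).
  assert (HI : is_RInt (fun u => q u * sin (M*u) - q' u * cos (M*u) / M) a b
                 ((- (q b * cos (M*b)) / M) - (- (q a * cos (M*a)) / M))).
  { apply (is_RInt_derive (V:=R_CompleteNormedModule) (fun u => - (q u * cos (M*u)) / M)).
    - intros u Hu. rewrite Hmin, Hmax in Hu.
      assert (Hq := Hd u Hu).
      auto_derive. exists (q' u); auto.
      replace (Derive (fun x => q x) u) with (q' u) by (symmetry; apply is_derive_unique; auto).
      field. lra.
    - intros u Hu. rewrite Hmin, Hmax in Hu.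
      apply cminus. apply cmul. apply Hqc; auto. apply dcont; auto_derive; auto.
      apply (cmul (fun u => q' u * cos (M*u)) (fun _ => /M)). apply cmul. apply Hc; auto.
      apply dcont; auto_derive; auto. apply continuous_const. }
  assert (Hex2 : ex_RInt (fun u => / M * (q' u * cos (M*u))) a b).
  { apply (ex_RInt_continuous (V:=R_CompleteNormedModule)). intros u Hu. rewrite Hmin, Hmax in Hu.
    apply (cmul (fun _ => /M) (fun u => q' u * cos (M*u))). apply continuous_const.
    apply cmul. apply Hc; auto. apply dcont; auto_derive; auto. }
  rewrite (RInt_ext _ (fun u => (q u * sin (M*u) - q' u * cos (M*u) / M) + / M * (q' u * cos (M*u)))).
  2:{ intros; toR; field; lra. }
  rewrite (RInt_plus (V:=R_CompleteNormedModule)); [| eexists; eauto | auto].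
  rewrite (is_RInt_unique _ _ _ _ HI).
  rewrite (RInt_scal (V:=R_CompleteNormedModule) (fun u => q' u * cos (M*u))).
  2:{ apply (ex_RInt_continuous (V:=R_CompleteNormedModule)). intros u Hu. rewrite Hmin, Hmax in Hu.
      apply cmul. apply Hc; auto. apply dcont; auto_derive; auto. }
  change plus with Rplus. change scal with Rmult. simpl.
  assert (HB : Rabs (RInt (fun u => q' u * cos (M*u)) a b) <= (b - a) * K).
  { apply abs_RInt_le_const; auto.
    apply (ex_RInt_continuous (V:=R_CompleteNormedModule)). intros u Hu. rewrite Hmin, Hmax in Hu.
    apply cmul. apply Hc; auto. apply dcont; auto_derive; auto.
    intros t Ht. rewrite Rabs_mult. pose proof (HM t Ht). fold K in H.
    pose proof (COS_bound (M*t)). assert (Rabs (cos (M*t)) <= 1) by (apply Rabs_le; lra).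
    pose proof (Rabs_pos (q' t)). pose proof (Rabs_pos (cos (M*t))). nra. }
  set (I2 := RInt (fun u => q' u * cos (M*u)) a b) in *.
  assert (Hca : Rabs (cos (M*a)) <= 1) by (apply Rabs_le; apply COS_bound).
  assert (Hcb : Rabs (cos (M*b)) <= 1) by (apply Rabs_le; apply COS_bound).
  replace (- (q b * cos (M * b)) / M - - (q a * cos (M * a)) / M + / M * I2)
    with ((q a * cos (M*a) - q b * cos (M*b) + I2) / M) by (field; lra).
  unfold Rdiv. rewrite Rabs_mult, (Rabs_right (/M)) by (apply Rle_ge; apply Rlt_le; apply Rinv_0_lt_compat; auto).
  apply Rmult_le_compat_r. apply Rlt_le; apply Rinv_0_lt_compat; auto.
  eapply Rle_trans. apply Rabs_triang. eapply Rle_trans. apply Rplus_le_compat_r. apply Rabs_triang.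
  rewrite Rabs_Ropp, !Rabs_mult.
  pose proof (Rabs_pos (q a)); pose proof (Rabs_pos (q b)). 
  pose proof (Rabs_pos (cos (M*a))); pose proof (Rabs_pos (cos (M*b))). nra.
Qed.
Definition FT (h : R -> R) (x : R) (n : nat) : R :=
  match n with O => fa0 h | S _ => fa h n * cos (INR n * x) + fb h n * sin (INR n * x) end.

Fixpoint DK (N : nat) (u : R) : R :=
  match N with O => 1 | S m => DK m u + 2 * cos (INR (S m) * u) end.

Lemma DK_der N u : ex_derive (DK N) u.
Proof.
  induction N.
  - change (ex_derive (fun _ : R => 1) u). auto_derive; auto.
  - change (ex_derive (fun u => DK N u + 2 * cos (INR (S N) * u)) u). auto_derive. repeat split; auto.
Qed.

Lemma DK_c N : contR (DK N).
Proof. intro u. apply dcont. apply DK_der. Qed.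

Lemma DK_sin N u : DK N u * sin (u/2) = sin ((INR N + /2) * u).
Proof.
  induction N.
  - simpl. rewrite Rmult_1_l. f_equal. field.
  - change ((DK N u + 2 * cos (INR (S N) * u)) * sin (u/2) = sin ((INR (S N) + /2) * u)).
    rewrite Rmult_plus_distr_r, IHN. rewrite S_INR.
    set (X := (INR N + 1) * u).
    replace ((INR N + /2) * u) with (X - u/2) by (unfold X; field).
    replace ((INR N + 1 + /2) * u) with (X + u/2) by (unfold X; field).
    rewrite sin_minus, sin_plus. ring.
Qed.

Lemma int_cos_sym m : (1 <= m)%nat -> RInt (fun u => cos (INR m * u)) (-PI) PI = 0.
Proof.
  intros Hm. rewrite <- (int_cos_m m Hm).
  rewrite <- (per_int2 (fun t => cos (INR m * t)) 0).
  - apply RInt_ext. intros; f_equal; f_equal; ring.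
  - cont.
  - intros; apply cosnP.
Qed.

Lemma int_DK N : RInt (DK N) (-PI) PI = 2*PI.
Proof.
  induction N.
  - change (RInt (fun _ : R => 1) (-PI) PI = 2*PI). rewrite RInt_const.
    change scal with Rmult. simpl. toR; ring.
  - change (RInt (fun u => DK N u + 2 * cos (INR (S N) * u)) (-PI) PI = 2*PI).
    rewrite RInt_add, RInt_scl, IHN, int_cos_sym by (try lia; try apply DK_c; cont).
    toR; ring.
Qed.

Lemma coef_rep (h : R -> R) x m : (1 <= m)%nat -> (forall y, ex_derive h y) -> periodic2pi h ->
  fa h m * cos (INR m * x) + fb h m * sin (INR m * x)
  = / PI * RInt (fun u => h (x+u) * cos (INR m * u)) (-PI) PI.
Proof.
  intros Hm Hd Hp.
  set (F := fun t => h t * cos (INR m * (t - x))).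
  assert (cF : contR F) by (unfold F; cont).
  transitivity (/PI * RInt F 0 (2*PI)).
  - unfold fa, fb, F.
    rewrite (RInt_ext (fun t => h t * cos (INR m * (t - x))) (fun t => cos (INR m * x) * (h t * cos (INR m * t)) + sin (INR m * x) * (h t * sin (INR m * t)))).
    rewrite RInt_add, !RInt_scl. toR. ring.
    cont. cont. apply contR_scal; cont. apply contR_scal; cont.
    intros t _. replace (INR m * (t - x)) with (INR m * t - INR m * x) by ring. rewrite cos_minus. toR; ring.
  - f_equal. rewrite <- (per_int2 F x); auto.
    + apply RInt_ext. intros u _. unfold F. do 3 f_equal. ring.
    + intros t. unfold F. rewrite Hp. replace (t + 2*PI - x) with ((t - x) + 2*PI) by ring.
      rewrite cosnP. auto.
Qed.

Lemma Spart (h : R -> R) x N : (forall y, ex_derive h y) -> periodic2pi h ->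
  sum_n (FT h x) N = / (2*PI) * RInt (fun u => h (x+u) * DK N u) (-PI) PI.
Proof.
  intros Hd Hp. pose proof PI_RGT_0.
  induction N.
  - rewrite sum_O. simpl FT. unfold fa0. f_equal.
    rewrite <- (per_int2 h x); auto.
    + apply RInt_ext. intros; simpl. symmetry; apply Rmult_1_r.
    + intro; apply dcont; auto.
  - rewrite sum_Sn, IHN. change plus with Rplus.
    change (FT h x (S N)) with (fa h (S N) * cos (INR (S N) * x) + fb h (S N) * sin (INR (S N) * x)).
    rewrite coef_rep by (auto; lia).
    rewrite (RInt_ext (fun u => h (x+u) * DK (S N) u) (fun u => h (x+u) * DK N u + 2 * (h (x+u) * cos (INR (S N) * u)))).
    rewrite RInt_add, RInt_scl. toR; field; lra.
    cont. intro u; apply cmul. cont0. apply DK_c.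
    apply contR_scal. cont.
    intros u _. change (DK (S N) u) with (DK N u + 2 * cos (INR (S N) * u)). toR; ring.
Qed.
Lemma sin_lin a : 0 <= a <= 1/2 -> a/2 <= sin a.
Proof.
intros. destruct (SIN a) as [H1 _]. lra. pose proof PI2_3_2. lra.
 unfold sin_lb, sin_approx, sin_term in H1. simpl in H1.
 assert (0 <= a*a <= 1/4) by nra. assert (0<= a*a*a*a <= 1/16) by nra.
 assert (0 <= a*a*a*a*a*a) by nra.
 nra.
Qed.

Lemma sinh_abs u : Rabs u <= 1 -> Rabs u / 4 <= Rabs (sin (u/2)).
Proof.
  intros Hu. destruct (Rle_dec 0 u).
  - rewrite Rabs_right in * by lra. pose proof (sin_lin (u/2) ltac:(lra)).
    rewrite Rabs_right by lra. lra.
  - rewrite Rabs_left in * by lra. pose proof (sin_lin (-(u/2)) ltac:(lra)).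
    rewrite sin_neg in H. rewrite Rabs_left1 by lra. lra.
Qed.

Lemma inner_bd (h : R -> R) x B N u : (forall y, ex_derive h y) ->
  (forall y, x - 1 <= y <= x + 1 -> Rabs (Derive h y) <= B) -> Rabs u <= 1 ->
  Rabs ((h (x+u) - h x) * DK N u) <= 4 * B.
Proof.
  intros Hd HB Hu.
  assert (B0 : 0 <= B) by (pose proof (HB x ltac:(lra)); pose proof (Rabs_pos (Derive h x)); lra).
  destruct (Req_dec u 0) as [->|Hu0].
  { replace (x + 0) with x by ring. rewrite Rminus_diag, Rmult_0_l, Rabs_R0. lra. }
  destruct (MVT_gen (fun t => h (x + t)) 0 u (fun t => Derive h (x + t))) as [c [Hc Hm]].
  { intros t _. auto_derive. apply Hd. rewrite Rmult_1_l. reflexivity. }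
  { intros t _. apply continuity_pt_filterlim. apply (dcont (fun t => h (x+t)) t). auto_derive. apply Hd. }
  simpl in Hm. replace (x + 0) with x in Hm by ring. rewrite Hm.
  assert (Hc1 : Rabs c <= Rabs u).
  { unfold Rmin, Rmax in Hc. destruct (Rle_dec 0 u); apply Rabs_le;
    [rewrite Rabs_right | rewrite Rabs_left]; lra. }
  assert (Hcc : -1 <= c <= 1).
  { pose proof (Rle_abs c). pose proof (Rle_abs (-c)). rewrite Rabs_Ropp in H0. lra. }
  assert (Hb : Rabs (Derive h (x + c)) <= B) by (apply HB; lra).
  pose proof (DK_sin N u) as Hs.
  assert (Hs1 : Rabs (DK N u) * Rabs (sin (u/2)) <= 1).
  { rewrite <- Rabs_mult, Hs. apply Rabs_le. apply SIN_bound. }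
  pose proof (sinh_abs u Hu) as Hs2.
  rewrite !Rabs_mult. replace (u - 0) with u by ring.
  pose proof (Rabs_pos (Derive h (x + c))). pose proof (Rabs_pos u). pose proof (Rabs_pos (DK N u)).
  assert (Rabs u * Rabs (DK N u) <= 4) by nra.
  nra.
Qed.
Lemma fourier (h : R -> R) x : smooth h -> periodic2pi h -> is_series (FT h x) (h x).
Proof.
  intros Hs Hp.
  assert (Hd : forall y, ex_derive h y) by (intro y; exact (Hs 1%nat y)).
  assert (Hd2 : forall y, ex_derive (Derive h) y) by (intro y; exact (Hs 2%nat y)).
  pose proof PI_RGT_0 as Hpi. pose proof PI2_3_2 as Hpi3.
  destruct (continuity_ab_maj (fun y => Rabs (Derive h y)) (x-1) (x+1)) as [Mx [HM _]].
  lra. intros; apply cont_abs_pt; apply dcont; auto.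
  set (B := Rabs (Derive h Mx) + 1).
  assert (HB : forall y, x-1 <= y <= x+1 -> Rabs (Derive h y) <= B)
    by (intros y Hy; specialize (HM y Hy); unfold B; lra).
  assert (B0 : 0 < B) by (unfold B; pose proof (Rabs_pos (Derive h Mx)); lra).
  set (Phi := fun N u => (h (x+u) - h x) * DK N u).
  assert (cPhi : forall N, contR (Phi N)).
  { intros N u. unfold Phi. apply (cmul (fun t => h (x+t) - h x) (DK N)). cont0. apply DK_c. }
  assert (Hrep : forall N, sum_n (FT h x) N - h x = /(2*PI) * RInt (Phi N) (-PI) PI).
  { intros N. rewrite Spart by auto. unfold Phi.
    rewrite (RInt_ext (fun u => (h (x+u) - h x) * DK N u) (fun u => h (x+u) * DK N u - h x * DK N u))
      by (intros; toR; ring).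
    rewrite RInt_sub, RInt_scl, int_DK. toR. set (I := RInt (fun u : R => h (x + u) * DK N u) (- PI) PI). rewrite Rmult_minus_distr_l. f_equal. field; lra.
    apply DK_c. intro u; apply (cmul (fun t => h (x+t)) (DK N)). cont0. apply DK_c.
    apply contR_scal, DK_c. }
  set (q := fun u => (h (x+u) - h x) / sin (u/2)).
  set (q' := fun u => (Derive h (x+u) * sin (u/2) - (h (x+u) - h x) * (/2 * cos (u/2)))
                      / (sin (u/2) * sin (u/2))).
  assert (Hq : forall u, sin (u/2) <> 0 -> is_derive q u (q' u)).
  { intros u Hu. unfold q, q'. auto_derive. repeat split; try apply Hd; try exact Hu.
    unfold Rdiv in *. change (Derive (fun x0 => h x0)) with (Derive h). field. exact Hu. }
  assert (Hq' : forall u, sin (u/2) <> 0 -> continuous q' u).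
  { intros u Hu. unfold q'. apply dcont. auto_derive.
    repeat split; try apply Hd; try apply Hd2; try exact Hu.
    apply Rmult_integral_contrapositive_currified; exact Hu. }
  assert (Hqe : forall N u, sin (u/2) <> 0 -> Phi N u = q u * sin ((INR N + /2) * u)).
  { intros N u Hu. unfold Phi, q. rewrite <- DK_sin. field. exact Hu. }
  enough (HH : is_lim_seq (sum_n (FT h x)) (h x)) by exact HH.
  apply is_lim_seq_spec. intros eps. pose proof (cond_pos eps) as He.
  set (d := Rmin 1 (eps/(16*B))).
  assert (Hd0 : 0 < d) by (apply Rmin_pos; [lra | apply Rdiv_lt_0_compat; lra]).
  assert (Hd1 : d <= 1) by apply Rmin_l.
  assert (Hd3 : 16 * B * d <= eps).
  { assert (d <= eps/(16*B)) by apply Rmin_r.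
    apply (Rmult_le_compat_l (16*B)) in H; [|lra].
    replace (16 * B * (eps / (16 * B))) with (pos eps) in H by (field; lra). lra. }
  destruct (RL_bound d PI q q') as [C2 [C2p HC2]].
  { lra. }
  { intros u Hu. apply Hq. assert (0 < sin (u/2)) by (apply sin_gt_0; lra). lra. }
  { intros u Hu. apply Hq'. assert (0 < sin (u/2)) by (apply sin_gt_0; lra). lra. }
  assert (sneg : forall u, -PI <= u <= -d -> sin (u/2) < 0).
  { intros u Hu. replace (u/2) with (- (-u/2)) by field. rewrite sin_neg.
    assert (0 < sin (-u/2)) by (apply sin_gt_0; lra). lra. }
  destruct (RL_bound (-PI) (-d) q q') as [C1 [C1p HC1]].
  { lra. }
  { intros u Hu. apply Hq. pose proof (sneg u Hu). lra. }
  { intros u Hu. apply Hq'. pose proof (sneg u Hu). lra. }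
  destruct (INR_unbounded (2*(C1+C2)/eps)) as [N0 HN0].
  exists N0. intros N HN.
  rewrite Hrep.
  assert (HM0 : 0 < INR N + /2) by (pose proof (pos_INR N); lra).
  assert (HMN : INR N0 <= INR N + /2) by (apply le_INR in HN; lra).
  rewrite <- (RInt_Chasles (Phi N) (-PI) (-d) PI) by (apply ex_RInt_c; auto).
  rewrite <- (RInt_Chasles (Phi N) (-d) d PI) by (apply ex_RInt_c; auto).
  change plus with Rplus.
  rewrite (RInt_ext (Phi N) (fun u => q u * sin ((INR N + /2) * u)) (-PI) (-d)).
  2:{ intros u Hu. rewrite Rmin_left, Rmax_right in Hu by lra. apply Hqe.
      pose proof (sneg u ltac:(lra)). lra. }
  rewrite (RInt_ext (Phi N) (fun u => q u * sin ((INR N + /2) * u)) d PI).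
  2:{ intros u Hu. rewrite Rmin_left, Rmax_right in Hu by lra. apply Hqe.
      assert (0 < sin (u/2)) by (apply sin_gt_0; lra). lra. }
  pose proof (HC1 _ HM0) as A1. pose proof (HC2 _ HM0) as A2.
  assert (A3 : Rabs (RInt (Phi N) (-d) d) <= (d - -d) * (4*B)).
  { apply abs_RInt_le_const. lra. apply ex_RInt_c; auto.
    intros t Ht. unfold Phi. apply inner_bd; auto. apply Rabs_le. lra. }
  set (I1 := RInt (fun u => q u * sin ((INR N + /2) * u)) (-PI) (-d)) in *.
  set (I2 := RInt (fun u => q u * sin ((INR N + /2) * u)) d PI) in *.
  set (I3 := RInt (Phi N) (-d) d) in *.
  assert (HCM : (C1 + C2) / (INR N + /2) < eps / 2).
  { apply (Rmult_lt_reg_r (INR N + /2)); auto. unfold Rdiv.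
    rewrite Rmult_assoc, Rinv_l by lra. rewrite Rmult_1_r.
    assert (2 * (C1 + C2) / eps < INR N + /2) by lra.
    apply (Rmult_lt_compat_r eps) in H; auto. unfold Rdiv in H.
    replace (2 * (C1 + C2) * / eps * eps) with (2 * (C1 + C2)) in H by (field; lra). lra. }
  assert (Hsum : Rabs (I1 + (I3 + I2)) < eps).
  { eapply Rle_lt_trans. apply Rabs_triang. eapply Rle_lt_trans. apply Rplus_le_compat_l. apply Rabs_triang.
    unfold Rdiv in *. assert (C1 * / (INR N + /2) + C2 * / (INR N + /2) = (C1 + C2) * / (INR N + /2)) by ring.
    lra. }
  rewrite Rabs_mult. rewrite Rabs_right by (apply Rle_ge, Rlt_le, Rinv_0_lt_compat; lra).
  assert (/ (2*PI) < 1). { apply (Rmult_lt_reg_r (2*PI)); [lra|]. rewrite Rinv_l by lra. lra. }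
  pose proof (Rabs_pos (I1 + (I3 + I2))).
  nra.
Qed.
Lemma steiner_eq h : steiner_point h = (fa h 1, fb h 1).
Proof.
  unfold steiner_point, fa, fb. f_equal; f_equal; apply RInt_ext; intros t _;
  replace (INR 1 * t) with t by (simpl; ring); reflexivity.
Qed.

Lemma kterm_shift h k s j n : (0 < k)%nat -> kterm h k (theta k s j) n = kterm h k s n.
Proof.
  intros Hk. unfold kterm. destruct (andb _ _) eqn:E; [|reflexivity].
  apply Bool.andb_true_iff in E. destruct E as [_ E]. apply Nat.eqb_eq in E.
  pose proof (Nat.div_mod_eq n k) as Hd. rewrite E, Nat.add_0_r in Hd.
  assert (Hk0 : INR k <> 0) by (apply not_0_INR; lia).
  assert (HI : INR n = INR k * INR (n / k)) by (rewrite Hd at 1; rewrite mult_INR; auto).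
  replace (INR n * theta k s j) with (INR n * s + 2 * INR (n / k * j) * PI).
  rewrite cos_period, sin_period. reflexivity.
  unfold theta. rewrite mult_INR, HI. field. auto.
Qed.

Lemma FT_vanish h k s : (2 < k)%nat -> smooth h -> periodic2pi h ->
  (forall s, regular_polygon h k s /\ center_of_mass h k s = (fa h 1, fb h 1)) ->
  forall n, (2 <= n)%nat -> (n mod k <> 0)%nat -> FT h s n = 0.
Proof.
  intros Hk Hs Hp HL n Hn Hr.
  pose proof (lhs_struct h k (fa h 1) (fb h 1) Hk HL) as Hst.
  destruct (coef_vanish h k (fa h 1) (fb h 1) n Hk (fun y => Hs 1%nat y) Hp Hst Hn Hr) as [E1 E2].
  destruct n as [|n]. lia. unfold FT. rewrite E1, E2. ring.
Qed.

Lemma series_shift (a : nat -> R) l : is_series a l -> is_series (fun n => a (S n)) (l - a O).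
Proof. intros H. apply is_series_incr_1. assert (E : Rplus (l - a O) (a O) = l) by ring. unfold plus; simpl. rewrite E. exact H. Qed.

Lemma series_unshift (a : nat -> R) l : is_series (fun n => a (S n)) (l - a O) -> is_series a l.
Proof. intros H. apply is_series_decr_1. unfold plus, opp; simpl. exact H. Qed.

Theorem proposition4p1 (h : R -> R) (k : nat) :
  smooth h -> periodic2pi h -> (2 < k)%nat ->
  ((forall s : R, regular_polygon h k s /\ center_of_mass h k s = steiner_point h)
   <->
   (forall s : R,
      is_series (kterm h k s)
        (h s - fa0 h - fa h 1 * cos s - fb h 1 * sin s))).
Proof.
  intros Hs Hp Hk. rewrite steiner_eq. split.
  - intros HL s.
    pose proof (fourier h s Hs Hp) as HF.
    assert (H1 : is_series (fun n => FT h s (S n)) (h s - FT h s 0)).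
    { apply series_shift; auto. }
    assert (H2 : is_series (fun n => FT h s (S (S n))) (h s - FT h s 0 - FT h s 1)).
    { apply (series_shift (fun n => FT h s (S n))); auto. }
    apply series_unshift. apply (series_unshift (fun n => kterm h k s (S n))).
    replace (h s - fa0 h - fa h 1 * cos s - fb h 1 * sin s - kterm h k s 0 - kterm h k s 1)
      with (h s - FT h s 0 - FT h s 1).
    2:{ unfold kterm. simpl Nat.ltb. simpl andb.
        unfold FT. replace (INR 1 * s) with s by (simpl; ring). ring. }
    apply (is_series_ext (fun n => FT h s (S (S n)))); auto.
    intros n. unfold kterm.
    replace (Nat.ltb 1 (S (S n))) with true by (symmetry; apply Nat.ltb_lt; lia).
    cbn [andb]. destruct (Nat.eqb (S (S n) mod k) 0) eqn:E.
    + reflexivity.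
    + apply (FT_vanish h k s); auto. lia. apply Nat.eqb_neq; auto.
  - intros HR s.
    set (A := fa h 1). set (B := fb h 1).
    assert (Hc : forall j, h (theta k s j) = (h s - A * cos s - B * sin s) + A * cos (theta k s j) + B * sin (theta k s j)).
    { intros j. pose proof (is_series_unique _ _ (HR s)) as U1.
      pose proof (is_series_unique _ _ (HR (theta k s j))) as U2.
      rewrite (Series_ext _ (kterm h k s)) in U2 by (intros; apply kterm_shift; lia).
      rewrite U1 in U2. fold A B in U2. lra. }
    split.
    + eapply regular_circle; eauto.
    + eapply center_circle; eauto.
Qed.
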